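(* Let $G=S_n$ and $H=S_b\wr S_a$ (the stabiliser of a partition of $\{1,\dots,n\}$ into $a$ blocks of size $b$), where $n=ab$, $a=b+2$ and $b\geqslant 2$. Then $b(G,H)=3$.
   Context: For a subgroup $H\leqslant G$, $H_G=\bigcap_{g\in G}H^g$ is the core of $H$, and $b(G,H)=\min\{|S| : S\subseteq G,\ \bigcap_{g\in S}H^g=H_G\}$. Equivalently here, $b(G,H)$ is the minimal number of partitions of $\{1,\dots,n\}$ into $a$ parts of size $b$ whose common stabiliser in $S_n$ is trivial. *)

(* Defs.v *)
From mathcomp Require Import all_boot all_order all_fingroup.
Set Implicit Arguments. Unset Strict Implicit. Unset Printing Implicit Defensive.
Local Open Scope group_scope.

Definition core (gT : finGroupType) (G H : {set gT}) : {set gT} :=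
  \bigcap_(g in G) H :^ g.

(* The minimum is taken over a finite nonempty family (S = G always works),
   with default value #|G| (never reached strictly above the true minimum). *)
Definition base_size (gT : finGroupType) (G H : {set gT}) : nat :=
  \big[minn/#|G|]_(S : {set gT} | (S \subset G) &&
                     ((\bigcap_(g in S) H :^ g) == core G H)) #|S|.

(* The stabiliser in Sym({0,..,n-1}) of the partition of {0,..,n-1} into the
   consecutive blocks {k*b, ..., k*b + b-1}; when n = a*b this is a partition
   into a blocks of size b, and its stabiliser is S_b wr S_a. *)
Definition block_stab (n b : nat) : {set {perm 'I_n}} :=
  [set s : {perm 'I_n} | [forall i : 'I_n, forall j : 'I_n,
      ((s i %/ b) == (s j %/ b)) == ((i %/ b) == (j %/ b))]].

(* Main.v *)
Require Import Defs.
From mathcomp Require Import all_boot all_order all_fingroup.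
From mathcomp Require Import zify.
Set Implicit Arguments. Unset Strict Implicit. Unset Printing Implicit Defensive.


Definition pres (T : finType) (x : {perm T}) (L : T -> nat) :=
  forall i j, (L (x i) == L (x j)) = (L i == L j).

Lemma pres_inv (T : finType) (x : {perm T}) L : pres x L -> pres x^-1 L.
Proof. by move=> h i j; rewrite -h !permKV. Qed.

Lemma pres_mul (T : finType) (x y : {perm T}) L : pres x L -> pres y L -> pres (x * y) L.
Proof. by move=> hx hy i j; rewrite !permM hy hx. Qed.

Lemma pres1 (T : finType) L : pres (1 : {perm T}) L.
Proof. by move=> i j; rewrite !perm1. Qed.

Section GS.
Local Open Scope group_scope.
Lemma mem_bstab n b (x : {perm 'I_n}) :
  (x \in block_stab n b) <-> pres x (fun i => i %/ b).
Proof.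
rewrite inE; split.
  by move=> /forallP h i j; move: (h i) => /forallP /(_ j) /eqP.
by move=> h; apply/forallP=> i; apply/forallP=> j; rewrite h.
Qed.

Lemma mem_bstabJ n b (x g : {perm 'I_n}) :
  (x \in (block_stab n b :^ g)%g) <-> pres x (fun i => (g^-1)%g i %/ b).
Proof.
rewrite mem_conjg mem_bstab; split=> h i j.
  by move: (h (g^-1 i) (g^-1 j)); rewrite /conjg invgK !permM !permKV.
by rewrite /conjg invgK !permM h !permK.
Qed.
End GS.


Definition oth (T : finType) (A : {set T}) (c : T) := odflt c [pick c' in A :\ c].

Lemma oth_spec (T : finType) (A : {set T}) c : #|A| = 2 -> c \in A ->
  [/\ oth A c \in A, oth A c != c, oth A (oth A c) = c &
      forall c', c' \in A -> c' = c \/ c' = oth A c].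
Proof.
move=> /eqP /cards2P [x [y [nxy ->]]] cA.
have key : forall u v : T, u != v -> oth [set u; v] u = v.
  move=> u v nuv; rewrite /oth.
  have -> : [set u; v] :\ u = [set v].
    by apply/setP=> w; rewrite !inE; case: eqP => [->|]; rewrite ?(negbTE nuv) ?eqxx //= andbT.
  case: pickP => [w|/(_ v)]; last by rewrite inE eqxx.
  by rewrite inE => /eqP.
have nyx : y != x by rewrite eq_sym.
have k1 := key x y nxy.
have k2 : oth [set x; y] y = x by rewrite setUC; exact: key.
move: cA; rewrite !inE => /orP [] /eqP ->.
  rewrite k1 k2; split; rewrite ?inE ?eqxx ?orbT //.
  by move=> c'; rewrite !inE => /orP [] /eqP ->; [left|right].
rewrite k2 k1; split; rewrite ?inE ?eqxx ?orbT //.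
by move=> c'; rewrite !inE => /orP [] /eqP ->; [right|left].
Qed.

Section LB.
Variables (T : finType) (b : nat) (L M : T -> 'I_b.+2).
Hypothesis hL : forall r, #|[set i | L i == r]| = b.
Hypothesis hM : forall c, #|[set i | M i == c]| = b.
Hypothesis hinj : forall i j, L i = L j -> M i = M j -> i = j.

Definition Im := [set (L i, M i) | i : T].
Definition Z := ~: Im.
Definition rowZ r := [set c | (r, c) \in Z].
Definition colZ c := [set r | (r, c) \in Z].

Lemma card_rowZ r : #|rowZ r| = 2.
Proof.
have e : rowZ r = ~: (M @: [set i | L i == r]).
  apply/setP=> c; rewrite !inE; congr negb; apply/imsetP/imsetP.
    by case=> i _ [-> ->]; exists i; rewrite ?inE.
  by case=> i; rewrite inE => /eqP <- ->; exists i.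
have := cardsC (M @: [set i | L i == r]); rewrite -e card_in_imset ?hL ?card_ord.
  by move=> h; lia.
by move=> i j; rewrite !inE => /eqP hi /eqP hj; apply: hinj; rewrite hi hj.
Qed.

Lemma card_colZ c : #|colZ c| = 2.
Proof.
have e : colZ c = ~: (L @: [set i | M i == c]).
  apply/setP=> r; rewrite !inE; congr negb; apply/imsetP/imsetP.
    by case=> i _ [-> ->]; exists i; rewrite ?inE.
  by case=> i; rewrite inE => /eqP <- ->; exists i.
have := cardsC (L @: [set i | M i == c]); rewrite -e card_in_imset ?hM ?card_ord.
  by move=> h; lia.
by move=> i j; rewrite !inE => /eqP hi /eqP hj eL; apply: hinj => //; rewrite hi hj.
Qed.

Definition rhof (z : 'I_b.+2 * 'I_b.+2) :=
  if z \in Z then (z.1, oth (rowZ z.1) z.2) else z.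
Definition kapf (z : 'I_b.+2 * 'I_b.+2) :=
  if z \in Z then (oth (colZ z.2) z.1, z.2) else z.

Lemma rowZP r c : (c \in rowZ r) = ((r, c) \in Z).
Proof. by rewrite inE. Qed.
Lemma colZP r c : (r \in colZ c) = ((r, c) \in Z).
Proof. by rewrite inE. Qed.

Lemma rhofK : involutive rhof.
Proof.
move=> [r c]; rewrite /rhof /=; case zZ: ((r, c) \in Z); rewrite ?zZ //=.
have [h1 h2 h3 h4] := oth_spec (card_rowZ r) (etrans (rowZP r c) zZ).
by rewrite -rowZP h1 h3.
Qed.

Lemma kapfK : involutive kapf.
Proof.
move=> [r c]; rewrite /kapf /=; case zZ: ((r, c) \in Z); rewrite ?zZ //=.
have [h1 h2 h3 h4] := oth_spec (card_colZ c) (etrans (colZP r c) zZ).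
by rewrite -colZP h1 h3.
Qed.

Definition rho := perm (can_inj rhofK).
Definition kap := perm (can_inj kapfK).

Lemma rhoE z : rho z = rhof z. Proof. by rewrite permE. Qed.
Lemma kapE z : kap z = kapf z. Proof. by rewrite permE. Qed.

Lemma rhoK z : rho (rho z) = z. Proof. by rewrite !rhoE rhofK. Qed.
Lemma kapK z : kap (kap z) = z. Proof. by rewrite !kapE kapfK. Qed.
Lemma rho1 z : (rho z).1 = z.1. Proof. by rewrite rhoE /rhof; case: ifP. Qed.
Lemma kap2 z : (kap z).2 = z.2. Proof. by rewrite kapE /kapf; case: ifP. Qed.

Lemma rhoZ z : (rho z \in Z) = (z \in Z).
Proof.
move: z => [r c]; rewrite rhoE /rhof /=; case zZ: ((r, c) \in Z); rewrite ?zZ //=.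
have [h1 h2 h3 h4] := oth_spec (card_rowZ r) (etrans (rowZP r c) zZ).
by rewrite -rowZP h1.
Qed.
Lemma kapZ z : (kap z \in Z) = (z \in Z).
Proof.
move: z => [r c]; rewrite kapE /kapf /=; case zZ: ((r, c) \in Z); rewrite ?zZ //=.
have [h1 h2 h3 h4] := oth_spec (card_colZ c) (etrans (colZP r c) zZ).
by rewrite -colZP h1.
Qed.

Lemma rho_neq z : z \in Z -> rho z != z.
Proof.
move: z => [r c] zZ; rewrite rhoE /rhof zZ /=.
have [h1 h2 h3 h4] := oth_spec (card_rowZ r) (etrans (rowZP r c) zZ).
by apply: contra h2 => /eqP [->].
Qed.
Lemma kap_neq z : z \in Z -> kap z != z.
Proof.
move: z => [r c] zZ; rewrite kapE /kapf zZ /=.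
have [h1 h2 h3 h4] := oth_spec (card_colZ c) (etrans (colZP r c) zZ).
by apply: contra h2 => /eqP [->].
Qed.

Lemma row2 z w : z \in Z -> w \in Z -> w.1 = z.1 -> w = z \/ w = rho z.
Proof.
move: z w => [r c] [r' c'] /= zZ wZ er; subst r'.
have [h1 h2 h3 h4] := oth_spec (card_rowZ r) (etrans (rowZP r c) zZ).
rewrite rhoE /rhof zZ /=.
by case: (h4 c'); rewrite ?rowZP // => ->; [left|right].
Qed.
Lemma col2 z w : z \in Z -> w \in Z -> w.2 = z.2 -> w = z \/ w = kap z.
Proof.
move: z w => [r c] [r' c'] /= zZ wZ er; subst c'.
have [h1 h2 h3 h4] := oth_spec (card_colZ c) (etrans (colZP r c) zZ).
rewrite kapE /kapf zZ /=.
by case: (h4 r'); rewrite ?colZP // => ->; [left|right].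
Qed.

Definition om := (rho * kap)%g.
Lemma omE z : om z = kap (rho z). Proof. by rewrite permM. Qed.
Lemma om_rho_om y : om (rho (om y)) = rho y.
Proof. by rewrite !omE rhoK kapK. Qed.
Lemma iter_rho m y : iter m om (rho (iter m om y)) = rho y.
Proof. by elim: m y => [//|m IH] y; rewrite iterSr iterS om_rho_om IH. Qed.
Lemma omZ z : (om z \in Z) = (z \in Z).
Proof. by rewrite omE kapZ rhoZ. Qed.
Lemma iter_omZ m z : (iter m om z \in Z) = (z \in Z).
Proof. by elim: m => [//|m IH]; rewrite iterS omZ. Qed.
Lemma iter_inj m : injective (iter m om).
Proof. by move=> u v; rewrite -!permX; apply: perm_inj. Qed.

Lemma key z : z \in Z -> rho z \notin porbit om z.
Proof.
move=> zZ; apply/porbitP => -[j]; rewrite permX.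
have := odd_double_half j; set m := j./2; case: (odd j) => /= hj.
  have -> : j = m + m.+1 by rewrite -hj -addnn; lia.
  rewrite iterD => e.
  have := iter_rho m.+1 z; rewrite e iterSr => /iter_inj; rewrite omE rhoK => /eqP.
  by apply/negP; apply: kap_neq; rewrite iter_omZ.
have -> : j = m + m by rewrite -hj -addnn.
rewrite iterD => e.
have := iter_rho m z; rewrite e => /iter_inj /eqP.
by apply/negP; apply: rho_neq; rewrite iter_omZ.
Qed.

Definition Ob z := porbit om z.
Lemma Ob_om z : Ob (om z) = Ob z.
Proof. by have := porbit_perm om 1 z; rewrite expg1. Qed.
Lemma Ob_rho_om z : Ob (rho (om z)) = Ob (rho z).
Proof. by rewrite -[in RHS](om_rho_om z) Ob_om. Qed.
Definition Z1 := [set z in Z | enum_rank (Ob z) < enum_rank (Ob (rho z))].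
Lemma Z1E z : (z \in Z1) = (z \in Z) && (enum_rank (Ob z) < enum_rank (Ob (rho z))).
Proof. by rewrite /Z1 [LHS]in_set. Qed.
Lemma Z1Z z : z \in Z1 -> z \in Z.
Proof. by rewrite Z1E => /andP []. Qed.
Lemma Z1_om z : (om z \in Z1) = (z \in Z1).
Proof. by rewrite !Z1E omZ Ob_om Ob_rho_om. Qed.
Lemma Ob_neq z : z \in Z -> Ob z != Ob (rho z).
Proof.
move=> zZ; apply/negP => /eqP e; have := key zZ.
by rewrite -/(Ob z) e /Ob porbit_id.
Qed.
Lemma Z1_rho z : z \in Z -> (rho z \in Z1) = ~~ (z \in Z1).
Proof.
move=> zZ; rewrite !Z1E rhoZ rhoK zZ /=.
have := Ob_neq zZ; rewrite -(inj_eq (@enum_rank_inj _)) -val_eqE /=.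
by move=> /eqP h; apply/idP/idP; lia.
Qed.
Lemma kap_Z1 z : z \in Z -> (kap z \in Z1) = ~~ (z \in Z1).
Proof.
move=> zZ; have -> : kap z = om (rho z) by rewrite omE rhoK.
by rewrite Z1_om Z1_rho.
Qed.
Definition Winv z := rho (kap z).
Lemma om_Winv z : om (Winv z) = z. Proof. by rewrite omE rhoK kapK. Qed.
Lemma Z1_Winv z : (Winv z \in Z1) = (z \in Z1).
Proof. by rewrite -Z1_om om_Winv. Qed.
Lemma Z_Winv z : (Winv z \in Z) = (z \in Z).
Proof. by rewrite rhoZ kapZ. Qed.

Lemma Z1_row z w : z \in Z1 -> w \in Z1 -> w.1 = z.1 -> w = z.
Proof.
move=> z1 w1 e; case: (row2 (Z1Z z1) (Z1Z w1) e) => // wr.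
by move: w1; rewrite wr Z1_rho ?(Z1Z z1) // z1.
Qed.
Lemma Z1_col z w : z \in Z1 -> w \in Z1 -> w.2 = z.2 -> w = z.
Proof.
move=> z1 w1 e; case: (col2 (Z1Z z1) (Z1Z w1) e) => // wr.
by move: w1; rewrite wr kap_Z1 ?(Z1Z z1) // z1.
Qed.

Definition er r := (r, odflt r [pick c | (r, c) \in Z1]).
Definition ec c := (odflt c [pick r | (r, c) \in Z1], c).

Lemma er_Z1 r : er r \in Z1.
Proof.
have : exists c, (r, c) \in Z1.
  have : 0 < #|rowZ r| by rewrite card_rowZ.
  rewrite card_gt0 => /set0Pn [c]; rewrite rowZP => zZ.
  case: (boolP ((r, c) \in Z1)) => h; first by exists c.
  exists (rho (r, c)).2; move: h; rewrite -Z1_rho //.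
  by have := rho1 (r, c); case: (rho (r, c)) => r' c' /= ->.
case=> c hc; rewrite /er; case: pickP => [c' //|/(_ c)]; by rewrite hc.
Qed.
Lemma ec_Z1 c : ec c \in Z1.
Proof.
have : exists r, (r, c) \in Z1.
  have : 0 < #|colZ c| by rewrite card_colZ.
  rewrite card_gt0 => /set0Pn [r]; rewrite colZP => zZ.
  case: (boolP ((r, c) \in Z1)) => h; first by exists r.
  exists (kap (r, c)).1; move: h; rewrite -kap_Z1 //.
  by have := kap2 (r, c); case: (kap (r, c)) => r' c' /= ->.
case=> r hr; rewrite /ec; case: pickP => [r' //|/(_ r)]; by rewrite hr.
Qed.

Definition sigm r := (Winv (er r)).1.
Definition tau c := (Winv (ec c)).2.
Definition Phi (z : 'I_b.+2 * 'I_b.+2) := (sigm z.1, tau z.2).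

Lemma Phi_Z z : z \in Z -> Phi z \in Z.
Proof.
move=> zZ; rewrite /Phi /sigm /tau; case: (boolP (z \in Z1)) => z1.
  have -> : er z.1 = z by apply: Z1_row => //; apply: er_Z1.
  have -> : ec z.2 = z by apply: Z1_col => //; apply: ec_Z1.
  by rewrite -surjective_pairing Z_Winv.
have -> : er z.1 = rho z by apply: Z1_row; rewrite ?er_Z1 ?Z1_rho ?rho1.
have -> : ec z.2 = kap z by apply: Z1_col; rewrite ?ec_Z1 ?kap_Z1 ?kap2.
rewrite /Winv rho1 kapK -(kap2 (rho z)) -surjective_pairing.
by rewrite kapZ rhoZ.
Qed.

Lemma sig_inj : injective sigm.
Proof.
move=> r r' e.
have h1 : Winv (er r) \in Z1 by rewrite Z1_Winv er_Z1.
have h2 : Winv (er r') \in Z1 by rewrite Z1_Winv er_Z1.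
have := Z1_row h1 h2 (esym e).
by move=> /(congr1 om); rewrite !om_Winv => /(congr1 fst).
Qed.

Lemma tau_inj : injective tau.
Proof.
move=> c c' e.
have h1 : Winv (ec c) \in Z1 by rewrite Z1_Winv ec_Z1.
have h2 : Winv (ec c') \in Z1 by rewrite Z1_Winv ec_Z1.
have := Z1_col h1 h2 (esym e).
by move=> /(congr1 om); rewrite !om_Winv => /(congr1 snd).
Qed.

Lemma sig_neq r : sigm r != r.
Proof.
rewrite /sigm /Winv rho1; have eZ := Z1Z (er_Z1 r).
have := kap_neq eZ; have := kap2 (er r).
rewrite {3 4}/er /=; case: (kap (er r)) => r' c' /= -> .
by apply: contra => /eqP ->.
Qed.

Lemma Phi_inj : injective Phi.
Proof. by move=> [r c] [r' c'] [/sig_inj -> /tau_inj ->]. Qed.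

Lemma Phi_nZ z : z \notin Z -> Phi z \notin Z.
Proof.
move=> nz; apply/negP => pz.
have e : Phi @: Z = Z.
  apply/eqP; rewrite eqEcard card_imset ?leqnn ?andbT; last exact: Phi_inj.
  by apply/subsetP=> w /imsetP [u uZ ->]; apply: Phi_Z.
by move: pz; rewrite -{1}e mem_imset ?(negbTE nz) //; apply: Phi_inj.
Qed.

Lemma LM_nZ i : (L i, M i) \notin Z.
Proof. by rewrite /Z in_setC negbK; apply: imset_f. Qed.

Definition xf p := odflt p [pick q | (L q, M q) == Phi (L p, M p)].
Lemma xf_spec p : (L (xf p), M (xf p)) = Phi (L p, M p).
Proof.
have := Phi_nZ (LM_nZ p); rewrite /Z in_setC negbK => /imsetP [q _ hq].
rewrite /xf; case: pickP => [q' /eqP //|/(_ q)]; by rewrite hq eqxx.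
Qed.
Lemma xf_inj : injective xf.
Proof.
move=> p p' e; have := xf_spec p; rewrite e xf_spec => /Phi_inj [h1 h2].
exact: (hinj (esym h1) (esym h2)).
Qed.
Definition xB := perm xf_inj.
Lemma xBL i : L (xB i) = sigm (L i).
Proof. by rewrite permE; exact: (congr1 fst (xf_spec i)). Qed.
Lemma xBM i : M (xB i) = tau (M i).
Proof. by rewrite permE; exact: (congr1 snd (xf_spec i)). Qed.

Lemma LB_B : 0 < b -> exists x : {perm T}, x != (1%g : {perm T}) /\
  (forall i j, (L (x i) == L (x j)) = (L i == L j)) /\
  (forall i j, (M (x i) == M (x j)) = (M i == M j)).
Proof.
move=> hb; exists xB; split; last first.
  by split=> i j; rewrite ?xBL ?xBM ?(inj_eq sig_inj) ?(inj_eq tau_inj).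
have : 0 < #|[set i | L i == ord0]| by rewrite hL.
rewrite card_gt0 => /set0Pn [p _]; apply/negP => /eqP e.
by have := sig_neq (L p); rewrite -xBL e perm1 eqxx.
Qed.
End LB.

Lemma tperm_lab (T : finType) (U : eqType) (L : T -> U) i j k :
  L i = L j -> L (tperm i j k) = L k.
Proof. by move=> e; case: tpermP => [->|->|]. Qed.

Lemma LB_all (T : finType) b (L M : T -> 'I_b.+2) : 0 < b ->
  (forall r, #|[set i | L i == r]| = b) -> (forall c, #|[set i | M i == c]| = b) ->
  exists x : {perm T}, x != (1%g : {perm T}) /\
  (forall i j, (L (x i) == L (x j)) = (L i == L j)) /\
  (forall i j, (M (x i) == M (x j)) = (M i == M j)).
Proof.
move=> hb hL hM.
case: (boolP [exists i, exists j, [&& i != j, L i == L j & M i == M j]]).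
  move=> /existsP [i /existsP [j /and3P [nij /eqP eL /eqP eM]]].
  exists (tperm i j); split.
    apply/negP => /eqP /permP /(_ i); rewrite tpermL perm1 => e.
    by move: nij; rewrite e eqxx.
  by split=> k l; rewrite ?(tperm_lab _ eL) ?(tperm_lab _ eM).
move=> H; apply: LB_B => // i j eL eM; apply/eqP/negPn/negP => nij; apply: (negP H).
by apply/existsP; exists i; apply/existsP; exists j; rewrite nij eL eM !eqxx.
Qed.

Lemma rbd_lt a b r d : r < a -> d < b -> r * b + d < a * b.
Proof. by move=> ra db; nia. Qed.

Lemma divpt b r d : d < b -> (r * b + d) %/ b = r.
Proof. by move=> db; rewrite divnMDl ?divn_small ?addn0 //; lia. Qed.
Lemma modpt b r d : d < b -> (r * b + d) %% b = d.
Proof. by move=> db; rewrite modnMDl modn_small. Qed.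

Lemma card_blk a b r : r < a -> #|[set i : 'I_(a * b) | i %/ b == r]| = b.
Proof.
move=> ra; have [b0|bp] := posnP b.
  by subst b; rewrite -[RHS](card0 ('I_(a*0))); apply: eq_card => i; rewrite !inE; case: i; rewrite muln0.
pose f (d : 'I_b) : 'I_(a * b) := Ordinal (rbd_lt ra (ltn_ord d)).
have -> : [set i : 'I_(a * b) | i %/ b == r] = f @: setT.
  apply/setP=> i; rewrite inE; apply/eqP/imsetP.
    move=> e; have hd : i %% b < b by rewrite ltn_pmod.
    exists (Ordinal hd) => //; apply: val_inj => /=; rewrite -e -divn_eq //.
  by case=> d _ ->; rewrite /= divpt.
by rewrite card_imset ?cardsT ?card_ord // => d d' /(congr1 val) /= /addnI /val_inj.
Qed.

Definition Lk b (k : {perm 'I_(b.+2 * b)}) (i : 'I_(b.+2 * b)) : 'I_b.+2 :=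
  inord ((k^-1)%g i %/ b).

Lemma LkE b (k : {perm 'I_(b.+2 * b)}) i : 0 < b -> (Lk k i : nat) = (k^-1)%g i %/ b.
Proof. by move=> hb; rewrite inordK // ltnS -ltnS ltn_divLR. Qed.

Lemma card_Lk b (k : {perm 'I_(b.+2 * b)}) r : 0 < b -> #|[set i | Lk k i == r]| = b.
Proof.
move=> hb.
have -> : [set i | Lk k i == r] = k @: [set i : 'I_(b.+2 * b) | i %/ b == r].
  apply/setP=> i; rewrite inE -val_eqE /= LkE //.
  apply/eqP/imsetP => [e|[j]]; first by exists ((k^-1)%g i); rewrite ?inE ?e ?permKV.
  by rewrite inE => /eqP <- ->; rewrite permK.
by rewrite card_imset ?card_blk //; apply: perm_inj.
Qed.

Lemma LB_blk b (g h : {perm 'I_(b.+2 * b)}) : 0 < b ->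
  exists x : {perm 'I_(b.+2 * b)}, x != 1%g /\
    pres x (fun i => (g^-1)%g i %/ b) /\ pres x (fun i => (h^-1)%g i %/ b).
Proof.
move=> hb; have [x [nx [hx1 hx2]]] := LB_all hb (card_Lk g (b:=b) ^~ hb) (card_Lk h ^~ hb).
exists x; split=> //; split=> i j.
  by have := hx1 i j; rewrite -!val_eqE /= !LkE.
by have := hx2 i j; rewrite -!val_eqE /= !LkE.
Qed.


Ltac mdcase := repeat match goal with
  | |- context [if ?c then _ else _] =>
      lazymatch c with context [if _ then _ else _] => fail | _ => case: (boolP c) => ? /= end
  end.

Section UB.
Variable b : nat.
Hypothesis hb : 1 < b.
Local Notation n := (b.+2 * b).
Definition md m := if m < b.+2 then m else m - b.+2.
Definition zero r c := (c == r) || (c == md (r + b.+1)).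

Definition PL (i : 'I_n) := i %/ b.
Definition DL (i : 'I_n) := i %% b.
Definition QL (i : 'I_n) := md (PL i + DL i + 1).

Lemma bpos : 0 < b. Proof. lia. Qed.
Lemma PL_lt i : PL i < b.+2. Proof. by rewrite /PL ltn_divLR ?bpos. Qed.
Lemma DL_lt i : DL i < b. Proof. by rewrite /DL ltn_pmod ?bpos. Qed.

Lemma pt_eq i j : PL i = PL j -> DL i = DL j -> i = j.
Proof. by move=> e1 e2; apply: ord_inj; rewrite (divn_eq i b) (divn_eq j b) -/(PL i) -/(DL i) e1 e2. Qed.

Lemma n_pos : 0 < n. Proof. by rewrite muln_gt0 bpos. Qed.
Definition p0 : 'I_n := Ordinal n_pos.
Definition ptO r d : 'I_n := insubd p0 (r * b + d).
Lemma ptO_val r d : r < b.+2 -> d < b -> (ptO r d : nat) = r * b + d.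
Proof. by move=> hr hd; rewrite val_insubd rbd_lt. Qed.
Lemma PL_pt r d : r < b.+2 -> d < b -> PL (ptO r d) = r.
Proof. by move=> hr hd; rewrite /PL ptO_val // divpt. Qed.
Lemma DL_pt r d : r < b.+2 -> d < b -> DL (ptO r d) = d.
Proof. by move=> hr hd; rewrite /DL ptO_val // modpt. Qed.

Lemma QL_nz i : ~~ zero (PL i) (QL i).
Proof. have := PL_lt i; have := DL_lt i; rewrite /zero /QL /md; mdcase; lia. Qed.

Lemma cell_inj i j : PL i = PL j -> QL i = QL j -> i = j.
Proof.
move=> e; rewrite /QL e => h; apply: pt_eq => //.
have := DL_lt i; have := DL_lt j; have := PL_lt j; move: h; rewrite /md; mdcase; lia.
Qed.

Lemma ex_pt r c : r < b.+2 -> c < b.+2 -> ~~ zero r c -> exists i, PL i = r /\ QL i = c.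
Proof.
move=> hr hc hz; pose d := md (c + b.+1 - r).
have hd : d < b by move: hz; rewrite /zero /d /md; mdcase; lia.
exists (ptO r d); rewrite /QL PL_pt ?DL_pt //; split=> //.
by move: hz; rewrite /zero /d /md; mdcase; lia.
Qed.

Lemma QL_lt i : QL i < b.+2.
Proof. have := PL_lt i; have := DL_lt i; rewrite /QL /md; mdcase; lia. Qed.

Definition FixP (x : {perm 'I_n}) r := forall i, (PL (x i) == r) = (PL i == r).
Definition FixQ (x : {perm 'I_n}) c := forall i, (QL (x i) == c) = (QL i == c).

Lemma fixP_of x j : pres x PL -> PL (x j) = PL j -> FixP x (PL j).
Proof. by move=> h e i; rewrite -{1}e h. Qed.
Lemma fixQ_of x j : pres x QL -> QL (x j) = QL j -> FixQ x (QL j).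
Proof. by move=> h e i; rewrite -{1}e h. Qed.

Lemma zero_col x r j : pres x PL -> pres x QL -> FixP x r -> r < b.+2 ->
  zero r (QL j) -> zero r (QL (x j)).
Proof.
move=> hP hQ hF hr hz; apply/negPn/negP => nz.
have [k [k1 k2]] := ex_pt hr (QL_lt _) nz.
have e1 : PL ((x^-1)%g k) = r by apply/eqP; rewrite -hF permKV k1.
have e2 : QL ((x^-1)%g k) = QL j by apply/eqP; rewrite -hQ permKV k2.
by have := QL_nz ((x^-1)%g k); rewrite e1 e2 hz.
Qed.

Lemma zero_row x c j : pres x PL -> pres x QL -> FixQ x c -> c < b.+2 ->
  zero (PL j) c -> zero (PL (x j)) c.
Proof.
move=> hP hQ hF hc hz; apply/negPn/negP => nz.
have [k [k1 k2]] := ex_pt (PL_lt _) hc nz.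
have e1 : QL ((x^-1)%g k) = c by apply/eqP; rewrite -hF permKV k2.
have e2 : PL ((x^-1)%g k) = PL j by apply/eqP; rewrite -hP permKV k1.
by have := QL_nz ((x^-1)%g k); rewrite e1 e2 hz.
Qed.

Lemma ex_col c : c < b.+2 -> exists i, QL i = c.
Proof.
move=> hc; have h1 : md (c + 2) < b.+2 by rewrite /md; mdcase; lia.
have h2 : ~~ zero (md (c + 2)) c by rewrite /zero /md; mdcase; lia.
by have [i [_ e]] := ex_pt h1 hc h2; exists i.
Qed.

Lemma step x c : pres x PL -> pres x QL -> c < b.+2 ->
  FixQ x c -> FixQ x (md c.+1) -> FixP x (md c.+1) /\ FixQ x (md (md c.+1).+1).
Proof.
move=> hP hQ hc F0 F1.
have s1lt : md c.+1 < b.+2 by rewrite /md; mdcase; lia.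
have s2lt : md (md c.+1).+1 < b.+2 by rewrite /md; mdcase; lia.
have FP1 : FixP x (md c.+1).
  have j1 := PL_pt s1lt bpos.
  have := @zero_row x _ (ptO (md c.+1) 0) hP hQ F0 hc; rewrite j1.
  have := @zero_row x _ (ptO (md c.+1) 0) hP hQ F1 s1lt; rewrite j1.
  have := PL_lt (x (ptO (md c.+1) 0)).
  rewrite /zero; set y := PL _ => hy h1 h2.
  have e : y = md c.+1.
    move: h1 h2 hy; rewrite /md; mdcase; lia.
  by rewrite -j1; apply: fixP_of => //; rewrite j1.
split=> //.
have FP2 : FixP x (md (md c.+1).+1).
  have j2 := PL_pt s2lt bpos.
  have := @zero_row x _ (ptO (md (md c.+1).+1) 0) hP hQ F1 s1lt; rewrite j2.
  have := FP1 (ptO (md (md c.+1).+1) 0); rewrite j2.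
  have := PL_lt (x (ptO (md (md c.+1).+1) 0)).
  rewrite /zero; set y := PL _ => hy h1 h2.
  have e : y = md (md c.+1).+1.
    move: h1 h2 hy; rewrite /md; mdcase; lia.
  by rewrite -j2; apply: fixP_of => //; rewrite j2.
have [j3 e3] := ex_col s2lt.
have := @zero_col x _ j3 hP hQ FP2 s2lt; rewrite e3.
have := F1 j3; rewrite e3.
have := QL_lt (x j3).
rewrite /zero; set y := QL _ => hy h1 h2.
have e : y = md (md c.+1).+1.
  move: h1 h2 hy; rewrite /md; mdcase; lia.
by rewrite -e3; apply: fixQ_of => //; rewrite e3.
Qed.

Definition sc c := md c.+1.
Lemma md_mod y : y < 2 * b.+2 -> md y = y %% b.+2.
Proof.
move=> h2; rewrite /md; case: (ltnP y b.+2) => h1; first by rewrite modn_small.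
by rewrite -{2}(subnK h1) modnDr modn_small //; lia.
Qed.
Lemma iter_sc m c0 : c0 < b.+2 -> iter m sc c0 = (c0 + m) %% b.+2.
Proof.
move=> h; elim: m => [|m IH]; first by rewrite addn0 modn_small.
rewrite iterS IH /sc md_mod; last by have := ltn_pmod (c0 + m) (ltn0Sn b.+1); lia.
by rewrite addnS -addn1 modnDml addn1.
Qed.
Lemma sc_lt c : c < b.+2 -> sc c < b.+2.
Proof. by rewrite /sc /md; mdcase; lia. Qed.

Lemma all_fix x c0 : pres x PL -> pres x QL -> c0 < b.+2 ->
  FixQ x c0 -> FixQ x (sc c0) -> x = 1%g.
Proof.
move=> hP hQ hc F0 F1.
have ilt m : iter m sc c0 < b.+2 by rewrite iter_sc // ltn_pmod.
have H m : FixQ x (iter m sc c0) /\ FixQ x (iter m.+1 sc c0).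
  elim: m => [//|m [IH1 IH2]]; split=> //.
  by have [_] := step hP hQ (ilt m) IH1 IH2.
have HP m : FixP x (iter m.+1 sc c0).
  by have [IH1 IH2] := H m; have [] := step hP hQ (ilt m) IH1 IH2.
have hitQ c : c < b.+2 -> iter (c + b.+2 - c0) sc c0 = c.
  move=> hcc; rewrite iter_sc // -addnBA; last by lia.
  by rewrite addnA -[c0 + c]addnC -addnA subnKC ?modnDr ?modn_small //; lia.
have hitP c : c < b.+2 -> iter (c + b.+2 - c0 + b.+1).+1 sc c0 = c.
  move=> hcc; rewrite iter_sc //.
  have -> : c0 + (c + b.+2 - c0 + b.+1).+1 = 2 * b.+2 + c by lia.
  by rewrite modnMDl modn_small.
apply/permP => i; rewrite perm1; apply: cell_inj; apply/eqP.
  by have := HP (PL i + b.+2 - c0 + b.+1); rewrite hitP ?PL_lt // => ->.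
by have [+ _] := H (QL i + b.+2 - c0); rewrite hitQ ?QL_lt // => ->.
Qed.

Definition Frng (F : nat -> nat -> nat * nat) := forall r d, r < b.+2 -> d < b ->
  (F r d).1 < b.+2 /\ (F r d).2 < b.
Definition Finj (F : nat -> nat -> nat * nat) := forall r d r' d',
  r < b.+2 -> d < b -> r' < b.+2 -> d' < b -> F r d = F r' d' -> r = r' /\ d = d'.

Definition mkf F (i : 'I_n) : 'I_n := ptO (F (PL i) (DL i)).1 (F (PL i) (DL i)).2.
Lemma mkf_PL F i : Frng F -> PL (mkf F i) = (F (PL i) (DL i)).1.
Proof. by move=> h; have [h1 h2] := h _ _ (PL_lt i) (DL_lt i); rewrite PL_pt. Qed.
Lemma mkf_DL F i : Frng F -> DL (mkf F i) = (F (PL i) (DL i)).2.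
Proof. by move=> h; have [h1 h2] := h _ _ (PL_lt i) (DL_lt i); rewrite DL_pt. Qed.
Lemma mkf_inj F : Frng F -> Finj F -> injective (mkf F).
Proof.
move=> hr hi i j e.
have e1 := congr1 PL e; have e2 := congr1 DL e.
rewrite !mkf_PL // in e1; rewrite !mkf_DL // in e2.
have [] := hi _ _ _ _ (PL_lt i) (DL_lt i) (PL_lt j) (DL_lt j).
  by rewrite [F _ _]surjective_pairing e1 e2 -surjective_pairing.
exact: pt_eq.
Qed.

Definition Frot k r d : nat * nat := (md (r + k), d).
Definition Frefl r d : nat * nat := (md (b.+2 - r), b.-1 - d).
Definition FQ r d : nat * nat := (md (r + d + 1), d).
Definition FR r d : nat * nat :=
  if (r == 0) && (d == 0) then (1, 0) else
  if (r == 1) && (d == 0) then (2, 1) else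
  if (r == 2) && (d == 1) then (0, 0) else (r, d).

Lemma Frot_rng k : k < b.+2 -> Frng (Frot k).
Proof. by move=> hk r d hr hd; rewrite /Frot /md /=; mdcase; split; lia. Qed.
Lemma Frot_inj k : k < b.+2 -> Finj (Frot k).
Proof. by move=> hk r d r' d' hr hd hr' hd' [e1 e2]; move: e1; rewrite /md; mdcase; lia. Qed.
Lemma Frefl_rng : Frng Frefl.
Proof. by move=> r d hr hd; rewrite /Frefl /md /=; mdcase; split; lia. Qed.
Lemma Frefl_inj : Finj Frefl.
Proof. by move=> r d r' d' hr hd hr' hd' [e1 e2]; move: e1; rewrite /md; mdcase; lia. Qed.
Lemma FQ_rng : Frng FQ.
Proof. by move=> r d hr hd; rewrite /FQ /md /=; mdcase; split; lia. Qed.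
Lemma FQ_inj : Finj FQ.
Proof. by move=> r d r' d' hr hd hr' hd' [e1 e2]; move: e1; rewrite /md; mdcase; lia. Qed.
Lemma FR_rng : Frng FR.
Proof. by move=> r d hr hd; rewrite /FR; mdcase; split; lia. Qed.
Lemma FR_inj : Finj FR.
Proof.
move=> r d r' d' hr hd hr' hd'; rewrite /FR; mdcase;
by move=> e; move: (congr1 fst e) (congr1 snd e) => /= e1 e2; lia.
Qed.

Definition rot k (hk : k < b.+2) := perm (mkf_inj (Frot_rng hk) (Frot_inj hk)).
Definition refl := perm (mkf_inj Frefl_rng Frefl_inj).
Definition hQ := perm (mkf_inj FQ_rng FQ_inj).
Definition hR := perm (mkf_inj FR_rng FR_inj).

Lemma pres_of (h : {perm 'I_n}) (L : 'I_n -> nat) f :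
  (forall i, L i < b.+2) -> (forall i, L (h i) = f (L i)) ->
  (forall u v, u < b.+2 -> v < b.+2 -> f u = f v -> u = v) -> pres h L.
Proof.
move=> hl he hf i j; rewrite !he; apply/eqP/eqP => [|->//].
by apply: hf.
Qed.

Lemma rot_PL k (hk : k < b.+2) i : PL (rot hk i) = md (PL i + k).
Proof. by rewrite permE mkf_PL //; apply: Frot_rng. Qed.
Lemma rot_DL k (hk : k < b.+2) i : DL (rot hk i) = DL i.
Proof. by rewrite permE mkf_DL //; apply: Frot_rng. Qed.
Lemma rot_QL k (hk : k < b.+2) i : QL (rot hk i) = md (QL i + k).
Proof.
rewrite {1}/QL rot_PL rot_DL /QL.
by have := PL_lt i; have := DL_lt i; rewrite /md; mdcase; lia.
Qed.
Lemma refl_PL i : PL (refl i) = md (b.+2 - PL i).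
Proof. by rewrite permE mkf_PL //; apply: Frefl_rng. Qed.
Lemma refl_DL i : DL (refl i) = b.-1 - DL i.
Proof. by rewrite permE mkf_DL //; apply: Frefl_rng. Qed.
Lemma refl_QL i : QL (refl i) = b.+1 - QL i.
Proof.
rewrite {1}/QL refl_PL refl_DL /QL.
by have := PL_lt i; have := DL_lt i; rewrite /md; mdcase; lia.
Qed.

Lemma rot_presP k (hk : k < b.+2) : pres (rot hk) PL.
Proof.
apply: (pres_of (f := fun u => md (u + k))); [exact: PL_lt|exact: rot_PL|].
by move=> u v hu hv; rewrite /md; mdcase; lia.
Qed.
Lemma rot_presQ k (hk : k < b.+2) : pres (rot hk) QL.
Proof.
apply: (pres_of (f := fun u => md (u + k))); [exact: QL_lt|exact: rot_QL|].
by move=> u v hu hv; rewrite /md; mdcase; lia.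
Qed.
Lemma refl_presP : pres refl PL.
Proof.
apply: (pres_of (f := fun u => md (b.+2 - u))); [exact: PL_lt|exact: refl_PL|].
by move=> u v hu hv; rewrite /md; mdcase; lia.
Qed.
Lemma refl_presQ : pres refl QL.
Proof.
apply: (pres_of (f := fun u => b.+1 - u)); [exact: QL_lt|exact: refl_QL|].
by move=> u v hu hv; lia.
Qed.

Definition o0 := ptO 0 0.
Definition j0 := ptO b.+1 0.
Definition j1 := ptO b 0.
Lemma o0_PL : PL o0 = 0. Proof. by rewrite PL_pt ?bpos. Qed.
Lemma j0_QL : QL j0 = 0.
Proof. by rewrite /QL /j0 PL_pt ?DL_pt ?bpos // /md; mdcase; lia. Qed.
Lemma j1_QL : QL j1 = b.+1.
Proof. by rewrite /QL /j1 PL_pt ?DL_pt ?bpos // /md; mdcase; lia. Qed.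

Lemma fix_from y : pres y PL -> pres y QL -> PL (y o0) = 0 -> QL (y j0) = 0 -> y = 1%g.
Proof.
move=> hP hQ e1 e2.
have FP : FixP y 0 by rewrite -o0_PL; apply: fixP_of => //; rewrite o0_PL.
have FQ0 : FixQ y 0 by rewrite -j0_QL; apply: fixQ_of => //; rewrite j0_QL.
have FQ1 : FixQ y b.+1.
  rewrite -j1_QL; apply: fixQ_of => //; rewrite j1_QL.
  have := @zero_col y 0 j1 hP hQ FP (ltn0Sn _); rewrite j1_QL.
  have := FQ0 j1; rewrite j1_QL.
  have := QL_lt (y j1).
  rewrite /zero; set u := QL _ => hu h1 h2.
  by move: h1 h2 hu; rewrite /md; mdcase; lia.
apply: (all_fix hP hQ (ltnSn _) FQ1).
by rewrite /sc /md; mdcase; first lia; rewrite subnn.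
Qed.

Lemma step2 x : pres x PL -> pres x QL ->
  exists k (hk : k < b.+2) (e : bool), (x * rot hk * (if e then refl else 1) = 1)%g.
Proof.
move=> hP hQ.
have hr0 := PL_lt (x o0).
have hk : md (b.+2 - PL (x o0)) < b.+2 by rewrite /md; mdcase; lia.
exists (md (b.+2 - PL (x o0))), hk.
set y := (x * rot hk)%g.
have yP : pres y PL by apply: pres_mul => //; apply: rot_presP.
have yQ : pres y QL by apply: pres_mul => //; apply: rot_presQ.
have e0 : PL (y o0) = 0.
  by rewrite permM rot_PL; move: hr0; rewrite /md; mdcase; lia.
have FP : FixP y 0 by rewrite -o0_PL; apply: fixP_of => //; rewrite o0_PL.
have := @zero_col y 0 j0 yP yQ FP (ltn0Sn _); rewrite j0_QL.
have := QL_lt (y j0); rewrite /zero.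
case: (boolP (QL (y j0) == 0)) => [/eqP h0|h0] hl hz.
  by exists false; rewrite mulg1; apply: fix_from.
have h1 : QL (y j0) = b.+1 by move: hz h0 hl; rewrite /md; mdcase; lia.
exists true; apply: fix_from.
- by apply: pres_mul => //; apply: refl_presP.
- by apply: pres_mul => //; apply: refl_presQ.
- by rewrite permM refl_PL e0 /md; mdcase; lia.
- by rewrite permM refl_QL h1 subnn.
Qed.

Definition RL (i : 'I_n) := (FR (PL i) (DL i)).1.

Lemma rot0 (hk : 0 < b.+2) : rot hk = 1%g.
Proof.
apply/permP => i; rewrite perm1; apply: pt_eq; rewrite ?rot_DL // rot_PL addn0.
by have := PL_lt i; rewrite /md; mdcase; lia.
Qed.

Lemma UB_rigid x : pres x PL -> pres x QL -> pres x RL -> x = 1%g.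
Proof.
move=> hP hQ hR.
have [k [hk [e he]]] := step2 hP hQ.
have exw : (x^-1 = rot hk * (if e then refl else 1))%g.
  by rewrite -[RHS](mulKg x) [(x * (rot hk * _))%g]mulgA he mulg1.
have hw := pres_inv hR; rewrite exw in hw.
have u1 : PL (ptO 1 0) = 1 by rewrite PL_pt ?bpos //; lia.
have u2 : DL (ptO 1 0) = 0 by rewrite DL_pt ?bpos //; lia.
have v1 : PL (ptO 2 0) = 2 by rewrite PL_pt ?bpos //; lia.
have v2 : DL (ptO 2 0) = 0 by rewrite DL_pt ?bpos //; lia.
have := hw (ptO 1 0) (ptO 2 0).
rewrite /RL u1 u2 v1 v2 /= !permM eqxx => /eqP.
case: e exw {he hw} => /= exw; rewrite ?perm1.
  rewrite !refl_PL !refl_DL !rot_PL !rot_DL u1 u2 v1 v2 => h; exfalso; move: h.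
  by rewrite /FR /md; mdcase; lia.
rewrite !rot_PL !rot_DL u1 u2 v1 v2 => h; suff k0 : k = 0.
  by subst k; rewrite -(invgK x) exw mulg1 rot0 invg1.
by move: h; rewrite /FR /md; mdcase; lia.
Qed.
End UB.


Lemma pres_ext (T : finType) (x : {perm T}) L L' :
  (forall i, L i = L' i) -> pres x L -> pres x L'.
Proof. by move=> e h i j; rewrite -!e h. Qed.

Lemma bigmin_le (I : eqType) (r : seq I) (P : pred I) F x0 i :
  i \in r -> P i -> \big[minn/x0]_(j <- r | P j) F j <= F i.
Proof.
elim: r => [//|y r IH]; rewrite inE big_cons => /orP [/eqP <-|ir] Pi.
  by rewrite Pi geq_minl.
case: (P y); last exact: IH.
by rewrite geq_min IH ?orbT.
Qed.

Section Main.
Variable b : nat.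
Hypothesis hb : 1 < b.
Local Notation n := (b.+2 * b).
Local Notation H := (block_stab n b).
Local Open Scope group_scope.

Lemma hQ_PL i : PL (hQ hb i) = QL i.
Proof. by rewrite permE mkf_PL //; apply: FQ_rng. Qed.
Lemma hR_PL i : PL (hR hb i) = RL i.
Proof. by rewrite permE mkf_PL //; apply: FR_rng. Qed.

Definition S3 : {set {perm 'I_n}} := [set 1; (hQ hb)^-1; (hR hb)^-1].

Lemma one_in_conj g : (1 : {perm 'I_n}) \in H :^ g.
Proof. by rewrite mem_bstabJ; apply: pres1. Qed.

Lemma capS3 : \bigcap_(g in S3) H :^ g = [set 1].
Proof.
apply/eqP; rewrite eqEsubset; apply/andP; split; last first.
  by rewrite sub1set; apply/bigcapP => g _; apply: one_in_conj.
apply/subsetP => x /bigcapP hx; rewrite inE; apply/eqP.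
have h1 : x \in H :^ 1 by apply: hx; rewrite !inE eqxx.
have h2 : x \in H :^ (hQ hb)^-1 by apply: hx; rewrite !inE eqxx !orbT.
have h3 : x \in H :^ (hR hb)^-1 by apply: hx; rewrite !inE eqxx !orbT.
move: h1 h2 h3; rewrite !mem_bstabJ !invgK invg1 => h1 h2 h3.
apply: (UB_rigid hb).
- by apply: pres_ext h1 => i; rewrite perm1.
- by apply: pres_ext h2 => i; rewrite -hQ_PL.
- by apply: pres_ext h3 => i; rewrite -hR_PL.
Qed.

Lemma core_eq : core [set: {perm 'I_n}] H = [set 1].
Proof.
apply/eqP; rewrite eqEsubset; apply/andP; split.
  rewrite -capS3; apply/bigcapsP => g _; rewrite /core; apply: (bigcap_inf g); exact: in_setT.
by rewrite sub1set; apply/bigcapP => g _; apply: one_in_conj.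
Qed.

Lemma lower (S : {set {perm 'I_n}}) : \bigcap_(g in S) H :^ g = [set 1] -> 3 <= #|S|.
Proof.
move=> hS; rewrite leqNgt; apply/negP => hc.
have [g [h sub]] : exists g h, S \subset [set g; h].
  move: hc; rewrite ltnS leq_eqVlt ltnS leq_eqVlt ltnS leqn0 => /or3P [].
  - by move=> /cards2P [g [h [_ ->]]]; exists g, h.
  - by move=> /cards1P [g ->]; exists g, g; rewrite sub1set !inE eqxx.
  - by move=> /eqP /cards0_eq ->; exists 1, 1; rewrite sub0set.
have [x [nx [hx1 hx2]]] := LB_blk g h (ltnW hb).
have : x \in \bigcap_(g in S) H :^ g.
  apply/bigcapP => s /(subsetP sub); rewrite !inE => /orP [] /eqP ->;
  by rewrite mem_bstabJ.
by rewrite hS inE (negbTE nx).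
Qed.

Lemma base3 : base_size [set: {perm 'I_n}] H = 3.
Proof.
rewrite /base_size; apply/eqP; rewrite eqn_leq; apply/andP; split.
  have h3 : (S3 \subset [set: {perm 'I_n}]) &&
     ((\bigcap_(g in S3) H :^ g) == core [set: {perm 'I_n}] H).
    by rewrite subsetT capS3 core_eq eqxx.
  apply: leq_trans (bigmin_le (P := fun S : {set {perm 'I_n}} => (S \subset [set: {perm 'I_n}]) &&
     ((\bigcap_(g in S) H :^ g) == core [set: {perm 'I_n}] H)) _ _ (mem_index_enum S3) h3) _.
  by rewrite /S3 !cardsU !cards1; lia.
apply: (big_ind (fun v => 2 < v)).
- rewrite (eq_card (B := perm_on [set : 'I_n])); last first.
    by move=> p; rewrite inE unfold_in /perm_on /=; apply/esym/subsetP => i _; rewrite in_set.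
  rewrite card_perm /= cardsE /= card_ord.
  have hn : 3 <= n by nia.
  by apply: leq_trans hn _; case: n => [|m]; rewrite // factS leq_pmulr ?fact_gt0.
- by move=> u v hu hv; rewrite leq_min hu hv.
- by move=> S /andP [_ /eqP]; rewrite core_eq; apply: lower.
Qed.
End Main.

Theorem proposition2p4 (a b : nat) (hb : 2 <= b) (ha : a = b + 2) :
  base_size [set: {perm 'I_(a * b)}] (block_stab (a * b) b) = 3.
Proof. by subst a; rewrite addn2; apply: base3. Qed.
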